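(* Let $\Lambda_1,\dots,\Lambda_m$ be mutually disjoint bounded open sets in $\mathbb R^d$ and $\Lambda=\bigcup_{j=1}^m\Lambda_j$. Let $E\subseteq\partial\Lambda$ be closed and $E_j=\partial\Lambda_j\cap E$. Then: (i) $E=\bigcup_{j=1}^mE_j$. (ii) Suppose that $\overline{\Lambda_j}\cap\overline{\Lambda_i}\subseteq E$ for every pair of indices $i\ne j$. For fixed $j$ and $\psi\in C^\infty_{E_j}(\Lambda_j)$, let $\Psi\in C^\infty_E(\mathbb R^d)$ be any function whose restriction to $\Lambda_j$ equals $\psi$. Then $\operatorname{supp}\Psi\cap\overline{\Lambda_j}$ and $\operatorname{supp}\Psi\cap\bigcup_{k\ne j}\overline{\Lambda_k}$ have positive distance to each other.
   Context: For an open set $\Lambda\subset\mathbb R^d$ and closed $F\subset\partial\Lambda$, $C^\infty_F(\Lambda)=\{v|_\Lambda: v\in C^\infty_0(\mathbb R^d),\ \operatorname{supp}v\cap F=\emptyset\}$; $C^\infty_E(\mathbb R^d)$ denotes the set of $v\in C^\infty_0(\mathbb R^d)$ with $\operatorname{supp}v\cap E=\emptyset$. *)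

(* Defs.v *)
From HB Require Import structures.
From mathcomp Require Import all_boot all_order all_algebra.
From mathcomp Require Import all_classical all_reals all_analysis.
Set Implicit Arguments. Unset Strict Implicit. Unset Printing Implicit Defensive.
Import Order.TTheory GRing.Theory Num.Theory.
Import numFieldNormedType.Exports.
Local Open Scope classical_set_scope.
Local Open Scope ring_scope.

(* R^d is modelled as row vectors 'rV[R]_d (a normed space over R). *)

Section Defs.
Variables (R : realType) (d : nat).
Notation V := 'rV[R]_d.

Definition boundary (A : set V) : set V := closure A `\` interior A.

Definition fsupp (f : V -> R) : set V := closure [set x | f x != 0].

Fixpoint Ck (k : nat) (f : V -> R) : Prop :=
  match k with
  | 0 => continuous f
  | k.+1 => continuous f /\
      forall i : 'I_d, (forall x, derivable f x (delta_mx 0 i)) /\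
                        Ck k (fun x => derive f x (delta_mx 0 i))
  end.

Definition smooth (f : V -> R) : Prop := forall k, Ck k f.

Definition Cinf0 (f : V -> R) : Prop := smooth f /\ compact (fsupp f).

Definition CinfE (E : set V) (f : V -> R) : Prop :=
  Cinf0 f /\ fsupp f `&` E = set0.

(* Functions on Lam are
   represented by total functions V -> R, only their values on Lam matter. *)
Definition CinfF_on (Lam F : set V) (psi : V -> R) : Prop :=
  exists v : V -> R, Cinf0 v /\ fsupp v `&` F = set0 /\
                     forall x, Lam x -> psi x = v x.

Definition pos_dist (A B : set V) : Prop :=
  exists2 eps : R, 0 < eps & forall x y, A x -> B y -> eps <= `|x - y|.

End Defs.

(* Main.v *)
Require Import Defs.
From HB Require Import structures.
From mathcomp Require Import all_boot all_order all_algebra.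
From mathcomp Require Import all_classical all_reals all_analysis.
Import Order.TTheory GRing.Theory Num.Theory.
Import numFieldNormedType.Exports.
Local Open Scope classical_set_scope.
Local Open Scope ring_scope.

Lemma closed_bigcup_ord (R : realType) (d m : nat) (P : set 'I_m)
  (F : 'I_m -> set 'rV[R]_d) :
  (forall i, closed (F i)) -> closed (\bigcup_(i in P) F i).
Proof.
move=> cF; apply: closed_bigcup => //; exact: finite_finset.
Qed.

Arguments closed_bigcup_ord {R d m P F}.

Lemma pos_dist_compact (R : realType) (d : nat) (A B : set 'rV[R]_d) :
  compact A -> compact B -> A `&` B = set0 -> pos_dist A B.
Proof.
move=> cA cB AB.
have [->|/set0P [a Aa]] := eqVneq A set0.
  by exists 1 => // x y.
have [->|/set0P [b Bb]] := eqVneq B set0.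
  by exists 1 => // x y.
have cf : {within A `*` B, continuous (fun p : 'rV[R]_d * 'rV[R]_d => `|p.1 - p.2|)}.
  apply: continuous_subspaceT => p.
  apply: continuous_comp; last exact: norm_continuous.
  by apply: cvgB; [exact: cvg_fst | exact: cvg_snd].
have [c /set_mem [Ac1 Bc2] cmin] :=
  compact_EVT_min (A := A `*` B) (ex_intro _ (a, b) (conj Aa Bb)) (compact_setX cA cB) cf.
exists `|c.1 - c.2|.
  rewrite normr_gt0 subr_eq0; apply/eqP => e.
  have : (A `&` B) c.1 by split => //; rewrite e.
  by rewrite AB.
move=> x y Ax By; apply: (cmin (x, y)).
by apply/mem_set.
Qed.

Theorem lemma4p4 (R : realType) (d m : nat) (Lam : 'I_m -> set 'rV[R]_d)
  (E : set 'rV[R]_d) :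
  (forall j, open (Lam j)) ->
  (forall j, bounded_set (Lam j)) ->
  (forall i j, i != j -> Lam i `&` Lam j = set0) ->
  closed E ->
  E `<=` boundary (\bigcup_(j in setT) Lam j) ->
  (* (i) *)
  (E = \bigcup_(j in setT) (boundary (Lam j) `&` E))
  /\
  (* (ii) *)
  ((forall i j, i != j -> closure (Lam j) `&` closure (Lam i) `<=` E) ->
   forall (j : 'I_m) (psi Psi : 'rV[R]_d -> R),
     CinfF_on (Lam j) (boundary (Lam j) `&` E) psi ->
     CinfE E Psi ->
     (forall x, Lam j x -> Psi x = psi x) ->
     pos_dist (fsupp Psi `&` closure (Lam j))
              (fsupp Psi `&` \bigcup_(k in [set k | k != j]) closure (Lam k))).
Proof.
move=> oL _ _ _ HE; split.
  rewrite eqEsubset; split; last by move=> x [j _ []].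
  move=> x Ex; have [bc bi] := HE x Ex.
  have sub : \bigcup_(j in setT) Lam j `<=` \bigcup_(j in setT) closure (Lam j).
    by move=> y [k _ ?]; exists k => //; exact: subset_closure.
  have := closureS sub bc.
  rewrite -(proj1 (closure_id _) (closed_bigcup_ord (fun i => @closed_closure _ _))).
  case=> k _ ck; exists k => //; split => //; split => // ik; apply: bi.
  by apply: (interiorS _ ik) => y Ly; exists k.
move=> Hcl j psi Psi _ [[_ cpt] disj] _.
apply: pos_dist_compact.
- by apply: compact_closedI => //; exact: closed_closure.
- apply: compact_closedI => //.
  exact: (closed_bigcup_ord (fun i => @closed_closure _ _)).
- apply/seteqP; split => // x [[fx cj] [_ [k kj ck]]].
  have Ex : E x by apply: (Hcl k j) => //; split.
  have : (fsupp Psi `&` E) x by [].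
  by rewrite disj.
Qed.
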